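(* Let $\mathscr T=(V,\mathcal E)$ be the directed Cartesian product of directed trees $\mathscr T_1,\dots,\mathscr T_d$. Then (i) $\mathscr T$ has no circuits; (ii) $\mathscr T$ is connected; (iii) $\mathscr T$ has at most one root; (iv) $\mathrm{card}(\mathsf{Chi}(u)\cap\mathsf{Chi}(v))\le1$ for all $u,v\in V$ with $u\ne v$.
   Context: A directed graph is a pair $(V,\mathcal E)$ with $\mathcal E\subseteq (V\times V)\setminus\{(v,v):v\in V\}$. A circuit is a finite sequence $v_1,\dots,v_n$ ($n\ge2$) of distinct vertices with $(v_i,v_{i+1})\in\mathcal E$ for $i<n$ and $(v_n,v_1)\in\mathcal E$. The graph is connected if any two distinct vertices $u,v$ are joined by a finite sequence of distinct vertices $u=v_1,\dots,v_n=v$ with $(v_i,v_{i+1})$ or $(v_{i+1},v_i)\in\mathcal E$ for each $i$. A root is a vertex $v$ with no $u$ such that $(u,v)\in\mathcal E$. A directed tree is a connected directed graph without circuits in which every non-root vertex has exactly one $u$ with $(u,v)\in\mathcal E$. All directed trees are assumed leafless (each vertex has at least one $w$ with $(v,w)\in\mathcal E$). $\mathsf{Chi}(u)=\{v:(u,v)\in\mathcal E\}$. The directed Cartesian product of directed trees $\mathscr T_j=(V_j,\mathcal E_j)$ is $V=V_1\times\dots\times V_d$ with $(v,w)\in\mathcal E$ iff there is $k$ with $(v_k,w_k)\in\mathcal E_k$ and $w_j=v_j$ for $j\ne k$. *)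

(* Defs.v *)
From Stdlib Require Import List.
From mathcomp Require Import ssreflect ssrbool eqtype ssrnat fintype.
Import ListNotations.

Section Graphs.
Context {V : Type} (E : V -> V -> Prop).

Definition directed_graph : Prop := forall v, ~ E v v.

Fixpoint chain (R : V -> V -> Prop) (l : list V) : Prop :=
  match l with
  | x :: ((y :: _) as t) => R x y /\ chain R t
  | _ => True
  end.

Definition is_circuit (l : list V) : Prop :=
  2 <= length l /\ NoDup l /\ chain E l /\
  match l with x :: _ => E (last l x) x | [] => False end.

Definition connected : Prop :=
  forall u v, u <> v ->
    exists l : list V, NoDup (u :: l) /\ last (u :: l) u = v /\
      chain (fun a b => E a b \/ E b a) (u :: l).

Definition is_root (v : V) : Prop := forall u, ~ E u v.

Definition Chi (u : V) : V -> Prop := fun v => E u v.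

(* leafless directed tree *)
Definition directed_tree : Prop :=
  directed_graph /\ connected /\ (forall l, ~ is_circuit l) /\
  (forall v, ~ is_root v -> exists! u, E u v) /\
  (forall v, exists w, E v w).

End Graphs.

Definition prod_vertex {d : nat} (V : 'I_d -> Type) : Type := forall j, V j.

Definition prod_edge {d : nat} {V : 'I_d -> Type}
  (E : forall j, V j -> V j -> Prop) (v w : prod_vertex V) : Prop :=
  exists k, E k (v k) (w k) /\ forall j, j <> k -> w j = v j.

(* Main.v *)
Require Import Defs.
From Stdlib Require Import List.
From mathcomp Require Import ssreflect ssrbool eqtype ssrnat fintype.
From Stdlib Require Import Relations Classical FunctionalExtensionality ListDec Wf_nat Lia.
Import ListNotations.

Section Gen.
Context {A : Type}.

Lemma last_def (a : A) l d d' : List.last (a :: l) d = List.last (a :: l) d'.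
Proof. elim: l a => [|b l IH] a //=. exact: IH. Qed.

Lemma last_app_cons (l1 : list A) a l3 d :
  List.last (l1 ++ a :: l3) d = List.last (a :: l3) d.
Proof.
elim: l1 => //= b l1 IH; rewrite -IH; by destruct l1.
Qed.

Lemma chain_app (S : A -> A -> Prop) l1 x l2 :
  chain S (l1 ++ x :: l2) -> chain S (l1 ++ [x]) /\ chain S (x :: l2).
Proof.
elim: l1 => [|b l1 IH] /=. { move=> H; split => //. }
destruct l1 as [|c l1]; simpl.
- move=> [H1 H2]; split => //.
- move=> [H1 H2]. have [H3 H4] := IH H2. split => //.
Qed.

Lemma chain_app2 (S : A -> A -> Prop) l1 x l2 :
  chain S (l1 ++ [x]) -> chain S (x :: l2) -> chain S (l1 ++ x :: l2).
Proof.
elim: l1 => [|b l1 IH] //=.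
destruct l1 as [|c l1]; simpl.
- move=> [H1 _] H2; split => //.
- move=> [H1 H2] H3. split => //. exact: IH.
Qed.

Lemma simple_path (S : A -> A -> Prop) : forall l u, chain S (u :: l) ->
  exists l', NoDup (u :: l') /\ List.last (u :: l') u = List.last (u :: l) u
     /\ chain S (u :: l').
Proof.
intro l; induction l as [l IH] using (well_founded_induction (well_founded_ltof _ (@length A))).
move=> u Hc.
destruct (classic (NoDup (u :: l))) as [Hn|Hn].
{ exists l; split => //. }
have dec : decidable_eq A by move=> x y; apply: classic.
destruct (not_NoDup dec Hn) as [a [l1 [l2 [l3 Heq]]]].
destruct l1 as [|b l1].
- simpl in Heq. injection Heq => Hl Hu. subst u l.
  have Hc' : chain S (a :: l3).
  { have := chain_app S (a :: l2) a l3. simpl. move=> H. exact: (proj2 (H Hc)). }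
  destruct (IH l3) with (u := a) as [l' [H1 [H2 H3]]] => //.
  { unfold ltof. rewrite length_app /=. lia. }
  exists l'; split => //; split => //. rewrite H2.
  rewrite -(last_app_cons (a :: l2) a l3 a). done.
- simpl in Heq. injection Heq => Hl Hu. subst b l.
  have [Hc1 Hc2] := chain_app S (u :: l1) a (l2 ++ a :: l3) Hc.
  have [_ Hc3] := chain_app S (a :: l2) a l3 Hc2.
  have Hc' : chain S ((u :: l1) ++ a :: l3) by apply: chain_app2.
  destruct (IH (l1 ++ a :: l3)) with (u := u) as [l' [H1 [H2 H3]]] => //.
  { unfold ltof. rewrite !length_app /= length_app /=. lia. }
  exists l'; split => //; split => //. rewrite H2.
  rewrite -!/(app (u :: l1) _).
  rewrite !(last_app_cons (u :: l1)).
  rewrite (last_app_cons (a :: l2)). done.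
Qed.

Lemma crt_walk (S : A -> A -> Prop) u v : clos_refl_trans _ S u v ->
  exists l, chain S (u :: l) /\ List.last (u :: l) u = v.
Proof.
move=> H; apply clos_rt_rt1n in H. induction H as [x|x y z Hxy _ [l [H1 H2]]].
- by exists [].
- exists (y :: l); split => //. simpl in H2 |- *. rewrite -H2. exact: last_def.
Qed.

Lemma walk_crt (S : A -> A -> Prop) l u : chain S (u :: l) ->
  clos_refl_trans _ S u (List.last (u :: l) u).
Proof.
elim: l u => [|b l IH] u H. { apply: rt_refl. }
destruct H as [H1 H2].
apply: rt_trans; first by apply: rt_step; exact H1.
change (List.last (u :: b :: l) u) with (List.last (b :: l) u).
rewrite (last_def b l u b). exact: IH.
Qed.

Lemma circuit_of (S : A -> A -> Prop) x y : (forall v, ~ S v v) ->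
  S x y -> clos_refl_trans _ S y x -> exists c, is_circuit S c.
Proof.
move=> Hirr Hxy /(crt_walk S) [l [H1 H2]].
have [l' [N [L C]]] := simple_path S l y H1.
have Hyx : y <> x by move=> E; subst y; exact: (Hirr x Hxy).
exists (y :: l'). split.
- destruct l' as [|z l']. { case: Hyx. rewrite -H2 -L. done. }
  by [].
- split => //; split => //. rewrite L H2 //.
Qed.

End Gen.

Section Tree.
Context {A : Type} (E : A -> A -> Prop) (hT : directed_tree E).

Lemma tree_irr v : ~ E v v.
Proof. by case: hT => H _. Qed.

Lemma tree_nocirc l : ~ is_circuit E l.
Proof. by case: hT => _ [_ [H _]]. Qed.

Lemma tree_acyc x y : E x y -> clos_refl_trans _ E y x -> False.
Proof.
move=> H1 H2. have [c Hc] := circuit_of E x y tree_irr H1 H2. exact: (tree_nocirc c).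
Qed.

Lemma tree_par x z y : E x y -> E z y -> x = z.
Proof.
move=> H1 H2. case: hT => _ [_ [_ [H _]]].
have Hr : ~ is_root E y by move=> R; exact: (R x H1).
have [p [Hp Hu]] := H y Hr. by rewrite -(Hu x H1) -(Hu z H2).
Qed.

Lemma sink : forall t a b, chain (fun a b => E a b \/ E b a) (a :: b :: t) ->
  NoDup (a :: b :: t) -> E a b -> is_root E (List.last (b :: t) b) -> False.
Proof.
elim => [|c t IH] a b Hc Hn Hab Hr.
- exact: (Hr a Hab).
- destruct Hc as [_ [[Hbc|Hcb] Hc]].
  + apply: (IH b c).
    * split; [left; exact Hbc | exact Hc].
    * by inversion Hn.
    * exact Hbc.
    * rewrite (last_def c t c b). exact Hr.
  + have Hac : a <> c.
    { move=> Q; subst c. inversion Hn as [|? ? Hn1 _]. apply: Hn1. right; left. done. }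
    exact: Hac (tree_par a c b Hab Hcb).
Qed.

Lemma tree_root r1 r2 : is_root E r1 -> is_root E r2 -> r1 = r2.
Proof.
move=> H1 H2. apply: NNPP => Hne.
case: hT => _ [Hcon _].
have [l [Hn [Hl Hc]]] := Hcon r1 r2 Hne.
destruct l as [|b t]. { by case: Hne. }
have Hc0 := Hc.
destruct Hc as [[Hb|Hb] Hc]; last by exact: (H1 b Hb).
apply: (sink t r1 b Hc0 Hn Hb).
rewrite (last_def b t b r1). change (is_root E (List.last (r1 :: b :: t) r1)). by rewrite Hl.
Qed.

Lemma tree_crt a b : clos_refl_trans _ (fun a b => E a b \/ E b a) a b.
Proof.
destruct (classic (a = b)) as [->|Hne]. { apply: rt_refl. }
case: hT => _ [Hcon _].
have [l [Hn [Hl Hc]]] := Hcon a b Hne.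
rewrite -Hl. exact: walk_crt.
Qed.

End Tree.

From mathcomp Require Import zify.

Section Prod.
Context (d : nat) (V : 'I_d -> Type) (E : forall j, V j -> V j -> Prop)
  (hT : forall j, directed_tree (E j)).

Definition upd (f : prod_vertex V) (k : 'I_d) (x : V k) : prod_vertex V :=
  fun j => match eq_comparable k j with
           | left e => eq_rect k V x j e
           | right _ => f j end.

Lemma upd_eq f k x : upd f k x k = x.
Proof.
rewrite /upd. destruct (eq_comparable k k) as [e|n]; last by case: n.
by rewrite (eq_irrelevance e (Logic.eq_refl k)).
Qed.

Lemma upd_neq f k x j : j <> k -> upd f k x j = f j.
Proof.
move=> H. rewrite /upd. destruct (eq_comparable k j) as [e|n] => //. by case: H.
Qed.

Lemma upd_same f k : upd f k (f k) = f.
Proof.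
apply: functional_extensionality_dep => j.
destruct (classic (j = k)) as [->|n]; [exact: upd_eq | exact: upd_neq].
Qed.

Definition PE := prod_edge E.
Definition SPE := fun a b => PE a b \/ PE b a.

Lemma upd_edge w k a b : E k a b -> PE (upd w k a) (upd w k b).
Proof.
move=> H. exists k. rewrite !upd_eq. split => // j Hj. by rewrite !upd_neq.
Qed.

Lemma lift_crt w k a b : clos_refl_trans _ (fun a b => E k a b \/ E k b a) a b ->
  clos_refl_trans _ SPE (upd w k a) (upd w k b).
Proof.
elim => [x y [H|H]|x|x y z _ IH1 _ IH2].
- apply: rt_step. left. exact: upd_edge.
- apply: rt_step. right. exact: upd_edge.
- apply: rt_refl.
- exact: rt_trans IH1 IH2.
Qed.

Lemma prod_crt : forall m (u v : prod_vertex V),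
  (forall j : 'I_d, m <= j -> u j = v j) -> clos_refl_trans _ SPE u v.
Proof.
elim => [|m IH] u v H.
- have -> : u = v by apply: functional_extensionality_dep => j; apply: H.
  apply: rt_refl.
- case: (boolP (m < d)) => Hm.
  + set k := Ordinal Hm.
    apply: (rt_trans _ _ _ (upd u k (v k))).
    * rewrite -{1}(upd_same u k). apply: lift_crt. exact: tree_crt.
    * apply: IH => j Hj. destruct (classic (j = k)) as [->|n].
      { exact: upd_eq. }
      rewrite upd_neq //. apply: H.
      have : (j : nat) <> m.
      { move=> Q. apply: n. apply: val_inj. exact Q. }
      lia.
  + apply: IH => j Hj. have := ltn_ord j. lia.
Qed.

Lemma edge_proj k x y : PE x y -> clos_refl_trans _ (E k) (x k) (y k).
Proof.
move=> [k' [H1 H2]]. destruct (classic (k = k')) as [<-|n].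
- exact: rt_step.
- rewrite H2 //. apply: rt_refl.
Qed.

Lemma chain_proj k l x : chain PE (x :: l) ->
  clos_refl_trans _ (E k) (x k) (List.last (x :: l) x k).
Proof.
move=> H. have := walk_crt PE l x H.
move: (List.last (x :: l) x) => y Hc.
elim: Hc => [a b Hab|a|a b c _ IH1 _ IH2].
- exact: edge_proj.
- apply: rt_refl.
- exact: rt_trans IH1 IH2.
Qed.

End Prod.

Theorem mainTheorem9 (d : nat) (V : 'I_d -> Type)
  (E : forall j, V j -> V j -> Prop)
  (hT : forall j, directed_tree (E j)) :
  (forall l : list (prod_vertex V), ~ is_circuit (prod_edge E) l) /\
  connected (prod_edge E) /\
  (forall u v : prod_vertex V,
      is_root (prod_edge E) u -> is_root (prod_edge E) v -> u = v) /\
  (forall u v : prod_vertex V, u <> v ->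
      forall w1 w2, Chi (prod_edge E) u w1 -> Chi (prod_edge E) v w1 ->
        Chi (prod_edge E) u w2 -> Chi (prod_edge E) v w2 -> w1 = w2).
Proof.
split; [|split; [|split]].
-
  move=> [|v1 [|v2 r]] [Hlen [Hn [Hc Hcl]]] //.
  destruct Hc as [[k [H1 H2]] Hc].
  apply: (tree_acyc (E k) (hT k) (v1 k) (v2 k) H1).
  apply: rt_trans; first exact: (chain_proj d V E k r v2 Hc).
  change (List.last (v1 :: v2 :: r) v1) with (List.last (v2 :: r) v1) in Hcl.
  rewrite (last_def v2 r v1 v2) in Hcl.
  exact: (edge_proj d V E k _ _ Hcl).
-
  move=> u v Hne.
  have Hc := prod_crt d V E hT d u v (fun j Hj => ltac:(have := ltn_ord j; lia)).
  have [l [H1 H2]] := crt_walk _ u v Hc.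
  have [l' [N [L C]]] := simple_path _ l u H1.
  exists l'. split => //. split; first by rewrite L.
  exact C.
-
  move=> u v Hu Hv.
  have Hr : forall w : prod_vertex V, is_root (prod_edge E) w -> forall k, is_root (E k) (w k).
  { move=> w Hw k p Hp. apply: (Hw (upd d V w k p)). exists k.
    rewrite upd_eq. split => // j Hj. by rewrite upd_neq. }
  apply: functional_extensionality_dep => k.
  exact: (tree_root (E k) (hT k) _ _ (Hr u Hu k) (Hr v Hv k)).
-
  move=> u v Hne w1 w2 [ka [Hu1 Hu1']] [kb [Hv1 Hv1']] [kc [Hu2 Hu2']] [kd [Hv2 Hv2']].
  have Hdist : forall (u v w : prod_vertex V) ka kb,
      u <> v -> E ka (u ka) (w ka) -> (forall j, j <> ka -> w j = u j) ->
      E kb (v kb) (w kb) -> (forall j, j <> kb -> w j = v j) -> ka <> kb.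
  { move=> u0 v0 w ka0 kb0 Hne0 H1 H1' H2 H2' Q. subst kb0. apply: Hne0.
    apply: functional_extensionality_dep => j.
    destruct (classic (j = ka0)) as [->|n].
    - exact: (tree_par (E ka0) (hT ka0) _ _ _ H1 H2).
    - by rewrite -H1' // -H2'. }
  have Hab := Hdist u v w1 ka kb Hne Hu1 Hu1' Hv1 Hv1'.
  have Hcd := Hdist u v w2 kc kd Hne Hu2 Hu2' Hv2 Hv2'.
  have Hsame : forall (u v w1 w2 : prod_vertex V) ka kb kc kd,
      E ka (u ka) (w1 ka) -> (forall j, j <> ka -> w1 j = u j) ->
      E kb (v kb) (w1 kb) -> (forall j, j <> kb -> w1 j = v j) ->
      E kc (u kc) (w2 kc) -> (forall j, j <> kc -> w2 j = u j) ->
      (forall j, j <> kd -> w2 j = v j) -> kc <> kd -> kc = ka.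
  { move=> u0 v0 x1 x2 a b c e Ha Ha' Hb Hb' Hc Hc' He' Hce.
    apply: NNPP => Hca.
    rewrite (He' c Hce) in Hc.
    have Hux : u0 c = x1 c by rewrite Ha'.
    destruct (classic (c = b)) as [Q|Q].
    - subst b. rewrite -Hux in Hb.
      apply: (tree_acyc (E c) (hT c) _ _ Hc). apply: rt_step. exact Hb.
    - rewrite Hux (Hb' c Q) in Hc. exact: (tree_irr (E c) (hT c) _ Hc). }
  have Hca := Hsame u v w1 w2 ka kb kc kd Hu1 Hu1' Hv1 Hv1' Hu2 Hu2' Hv2' Hcd.
  have Hdb := Hsame v u w1 w2 kb ka kd kc Hv1 Hv1' Hu1 Hu1' Hv2 Hv2' Hu2'
    (fun Q => Hcd (Logic.eq_sym Q)).
  subst kc kd.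
  apply: functional_extensionality_dep => j.
  destruct (classic (j = ka)) as [->|n].
  + by rewrite Hv1' // Hv2'.
  + by rewrite Hu1' // Hu2'.
Qed.
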